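(* Let $G$ be a finite group, $H\leq G$, $x\in G$ and $h\in H$. If $hS_xh^{-1}=S_x$, then $h\in H_x$. In particular, if $hS_xh^{-1}\cap S_x\neq\varnothing$ then $h\in H_x$.
   Context: For $x\in G$, $H_x=\bigcap_{i\in\mathbb{Z}}x^iHx^{-i}$ and $S_x=H_x\cdot x\subseteq G$. *)

(* Defs.v *)
From mathcomp Require Import all_boot all_fingroup.
Set Implicit Arguments. Unset Strict Implicit. Unset Printing Implicit Defensive.
Import GroupScope.
Local Open Scope group_scope.

From mathcomp Require Import ssrint.
From mathcomp Require Import boolp.

Definition zpowg (gT : finGroupType) (x : gT) (i : int) : gT :=
  match i with
  | Posz n => x ^+ n
  | Negz n => (x ^+ n.+1)^-1
  end.

Definition conj_pow (gT : finGroupType) (H : {set gT}) (x : gT) (i : int)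
  : {set gT} := [set zpowg x i * h * zpowg x (- i) | h in H].

Definition Hx (gT : finGroupType) (H : {set gT}) (x : gT) : {set gT} :=
  [set y | `[< forall i : int, y \in conj_pow H x i >] ].

Definition Sx (gT : finGroupType) (H : {set gT}) (x : gT) : {set gT} :=
  Hx H x :* x.

(* Main.v *)
Require Import Defs.
Set Implicit Arguments. Unset Strict Implicit.
From mathcomp Require Import all_boot all_fingroup ssrint.
Import GroupScope.
Local Open Scope group_scope.

Lemma zpowg_neg (gT : finGroupType) (x : gT) (n : nat) :
  zpowg x (- (Posz n))%R = (x ^+ n)^-1.
Proof.
case: n => [|m]; first by rewrite /= invg1.
by rewrite -NegzE.
Qed.

Lemma zpowg_nat (gT : finGroupType) (x : gT) (i : int) :
  exists n, zpowg x i = x ^+ n /\ zpowg x (- i)%R = (x ^+ n)^-1.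
Proof.
case: i => [n|n].
  by exists n; rewrite zpowg_neg.
exists (#[x].-1 * n.+1)%N; split.
  by rewrite /= expgM -invg_expg expVgn.
by rewrite /= expgM -invg_expg expVgn invgK.
Qed.

Definition Qp (gT : finGroupType) (H : {set gT}) (x y : gT) :=
  forall n : nat, y ^ (x ^+ n) \in H.

Lemma HxP (gT : finGroupType) (H : {set gT}) (x y : gT) :
  y \in Hx H x <-> Qp H x y.
Proof.
rewrite /Hx inE; split.
  move/boolp.asboolP => Hy n.
  have := Hy (Posz n); rewrite /conj_pow zpowg_neg => /imsetP [h hH ->] /=.
  by rewrite !conjgE !mulgA mulVg mul1g -mulgA mulVg mulg1.
move=> Q; apply/boolp.asboolP => i.
have [n [E1 E2]] := zpowg_nat x i.
rewrite /conj_pow E1 E2; apply/imsetP; exists (y ^ (x ^+ n)); first exact: Q.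
by rewrite conjgE !mulgA mulgV mul1g -mulgA mulgV mulg1.
Qed.

Lemma pow_inv (gT : finGroupType) (x : gT) (n : nat) :
  exists m, x ^+ n = (x^-1) ^+ m.
Proof.
exists (#[x^-1].-1 * n)%N.
by rewrite expgM -invg_expg invgK.
Qed.

Lemma QpV (gT : finGroupType) (H : {set gT}) (x y : gT) :
  (forall n : nat, y ^ (x^-1 ^+ n) \in H) -> Qp H x y.
Proof.
move=> Q n; have [m ->] := pow_inv x n; exact: Q.
Qed.

Lemma Qp_inv (gT : finGroupType) (H : {set gT}) (x y : gT) :
  Qp H x y -> forall n : nat, y ^ (x^-1 ^+ n) \in H.
Proof.
move=> Q n; have [m ->] := pow_inv x^-1 n; rewrite invgK; exact: Q.
Qed.

Theorem lemma4p4 (gT : finGroupType) (G H : {group gT}) (x h : gT) :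
  H \subset G -> x \in G -> h \in H ->
  ((Sx H x) :^ h^-1 = Sx H x -> h \in Hx H x) /\
  ((Sx H x) :^ h^-1 :&: Sx H x != set0 -> h \in Hx H x).
Proof.
move=> _ _ hH.
have main : (Sx H x) :^ h^-1 :&: Sx H x != set0 -> h \in Hx H x.
  case/set0Pn => z; rewrite inE => /andP [].
  rewrite mem_conjg invgK !mem_rcoset => /HxP Qa /HxP Qb.
  set a := z ^ h * x^-1 in Qa; set b := z * x^-1 in Qb.
  have Ea : z ^ h = a * x by rewrite /a -mulgA mulVg mulg1.
  have Eb : z = b * x by rewrite /b -mulgA mulVg mulg1.
  clearbody a b.
  have Eh : h ^ x^-1 = b^-1 * h * a.
    move: Ea; rewrite Eb !conjgE invgK => Ea.
    have E1 : b * x * h = h * (a * x) by rewrite -Ea mulKVg -mulgA.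
    have E3 : x * h = b^-1 * (h * (a * x)).
      by rewrite -E1 -!mulgA mulKg.
    by rewrite mulgA E3 !mulgA mulgK.
  apply/HxP; apply: QpV.
  have gen : forall n, exists a' b', [/\ Qp H x a', Qp H x b' &
      h ^ (x^-1 ^+ n) = b' * h * a'].
    have QM : forall u v, Qp H x u -> Qp H x v -> Qp H x (u * v).
      by move=> u v Qu Qv n; rewrite conjMg groupM.
    have QI : forall u, Qp H x u -> Qp H x u^-1.
      by move=> u Qu n; rewrite conjVg groupV.
    have QX : forall u, Qp H x u -> Qp H x (u ^ x^-1).
      move=> u Qu; apply: QpV => n; rewrite -conjgM -expgS; exact: Qp_inv.
    elim=> [|n [a' [b' [Qa' Qb' E]]]].
      exists 1, 1; split; try by move=> n; rewrite conj1g group1.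
      by rewrite expg0 conjg1 mulg1 mul1g.
    exists (a * a' ^ x^-1), (b' ^ x^-1 * b^-1); split.
    - by apply: QM => //; apply: QX.
    - by apply: QM; [apply: QX | apply: QI].
    by rewrite expgSr conjgM E !conjMg Eh !mulgA.
  move=> n; have [a' [b' [Qa' Qb' ->]]] := gen n.
  have := Qa' 0; have := Qb' 0; rewrite expg0 !conjg1 => Hb' Ha'.
  by rewrite !groupM.
split=> // E; apply: main; rewrite E setIid; apply/set0Pn.
exists x; rewrite mem_rcoset mulgV; apply/HxP => n.
by rewrite conj1g group1.
Qed.
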